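(* Let $G=\operatorname{GL}_m(q)$ and let $\ell\le m$ be a prime dividing $q-1$; let $\ell^b$ be the exact power of $\ell$ dividing $q-1$. Then there exists an $\ell$-element $t\in G$ such that $|G:C_G(t)|_\ell\ge\ell^b$, with strict inequality unless $(m,\ell)\in\{(2,2),(3,2)\}$. If moreover $m$ is not a power of $\ell$, then for any integer $0\le b'\le b$ such an element $t$ can be chosen to have determinant of order $\ell^{b'}$. *)

(* Defs.v *)
From mathcomp Require Import all_boot all_order all_fingroup all_solvable all_algebra.
Set Implicit Arguments. Unset Strict Implicit. Unset Printing Implicit Defensive.
Import GRing.Theory.

(* GL_m(q) is modelled as the full group [set: {'GL_m[F]}] for a finite
   field F with #|F| = q.  For m >= 1 (here m >= l >= 2), 'GL_m[F] is the
   group of invertible m x m matrices over F. *)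
Definition GLfull (m : nat) (F : finFieldType) : {set {'GL_m[F]}} :=
  [set: {'GL_m[F]}].

(* Main.v *)
Require Import Defs.
From mathcomp Require Import all_boot all_order all_fingroup all_solvable all_algebra all_field.
From mathcomp Require Import zify.
Import GRing.Theory.

Section FileA.
Set Implicit Arguments. Unset Strict Implicit. Unset Printing Implicit Defensive.

Lemma semireg_dvd (gT : finGroupType) (H : {group gT}) (T : finType)
  (f : gT -> T -> T) (O : {set T}) :
  (forall x y w, x \in H -> y \in H -> f (x * y)%g w = f y (f x w)) ->
  (forall w, f 1%g w = w) ->
  (forall x w, x \in H -> w \in O -> f x w \in O) ->
  (forall x w, x \in H -> w \in O -> f x w = w -> x = 1%g) ->
  #|H| %| #|O|.
Proof.
move=> fM f1 fO freg.
have inj w : w \in O -> {in H &, injective (f^~ w)}.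
  move=> wO x y xH yH /= e.
  have : f (x * y^-1)%g w = w.
    by rewrite fM ?groupV // e -fM ?groupV // mulgV f1.
  have xyH : (x * y^-1)%g \in H by rewrite groupM ?groupV.
  by move/(freg _ _ xyH wO)/eqP; rewrite -eq_mulgV1 => /eqP.
have back x w : x \in H -> f x^-1%g (f x w) = w.
  by move=> xH; rewrite -fM ?groupV // mulgV f1.
move: {2}#|O| (leqnn #|O|) => k; elim: k O fO freg inj => [|k IH] O fO freg inj.
  by rewrite leqn0 => /eqP ->; rewrite dvdn0.
move=> leOk.
have [O0|[w wO]] := set_0Vmem O; first by rewrite O0 cards0 dvdn0.
pose Ow := [set f x w | x in H].
have sOw : Ow \subset O by apply/subsetP => _ /imsetP[x xH ->]; exact: fO.
have cOw : #|Ow| = #|H| by rewrite card_in_imset //; exact: inj.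
have fO' : forall x v, x \in H -> v \in O :\: Ow -> f x v \in O :\: Ow.
  move=> x v xH /setDP[vO vOw]; apply/setDP; split; first exact: fO.
  apply: contra vOw => /imsetP[y yH e]; apply/imsetP; exists (y * x^-1)%g.
    by rewrite groupM ?groupV.
  by rewrite fM ?groupV // -e back.
have := IH (O :\: Ow) fO'.
have -> : #|O| = #|O :\: Ow| + #|Ow|.
  by rewrite -(cardsID Ow O) (setIidPr sOw) addnC.
rewrite cOw => IH'; rewrite dvdn_addr ?dvdnn //; apply: IH'.
- by move=> x v xH /setDP[vO _]; exact: freg.
- by move=> v /setDP[vO _]; exact: inj.
rewrite -ltnS (leq_trans _ leOk) // -(cardsID Ow O) (setIidPr sOw) cOw.
by rewrite -{1}[#|O :\: Ow|]add0n ltn_add2r cardG_gt0.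
Qed.

End FileA.

Section FileB.
Set Implicit Arguments. Unset Strict Implicit. Unset Printing Implicit Defensive.
Local Open Scope ring_scope.

Section Cent.
Variable F : finFieldType.

Definition centc n (A : 'M[F]_n) :=
  #|[set X : 'M[F]_n | (X \in unitmx) && (X *m A == A *m X)]|.
Definition glc n := #|[set X : 'M[F]_n | X \in unitmx]|.

Lemma bridge n (t : {'GL_n.+1[F]}) :
  #|'C_(GLfull n.+1 F)[t]|%g = centc (GLval t).
Proof.
rewrite /GLfull setTI -(card_imset _ val_inj).
apply: eq_card => X; rewrite inE.
apply/imsetP/andP => [[u /cent1P cu ->]|[Xu /eqP cX]].
  split; first exact: (valP u).
  move: cu; rewrite /commute => /(congr1 val) => /= H.
  exact/eqP.
exists (Sub X Xu); last by rewrite SubK.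
apply/cent1P; apply: val_inj => /=.
exact: cX.
Qed.

Lemma card_GLc n : #|[set: {'GL_n.+1[F]}]| = glc n.+1.
Proof.
rewrite cardsT -(card_imset _ val_inj) /glc; apply: eq_card => X.
rewrite inE; apply/imsetP/idP => [[u _ ->]|Xu]; first exact: (valP u).
by exists (Sub X Xu).
Qed.

End Cent.

End FileB.

Section FileC.
Set Implicit Arguments. Unset Strict Implicit. Unset Printing Implicit Defensive.
Local Open Scope ring_scope.

Section Block.
Variable F : finFieldType.

Lemma comm_block a b (A : 'M[F]_a) (B : 'M[F]_b) (X : 'M[F]_(a + b)) :
  (forall Z : 'M_(a, b), A *m Z = Z *m B -> Z = 0) ->
  (forall Y : 'M_(b, a), B *m Y = Y *m A -> Y = 0) ->
  X *m block_mx A 0 0 B = block_mx A 0 0 B *m X ->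
  [/\ ursubmx X = 0, dlsubmx X = 0, ulsubmx X *m A = A *m ulsubmx X
    & drsubmx X *m B = B *m drsubmx X].
Proof.
move=> hAB hBA; rewrite -[X]submxK !mulmx_block.
rewrite !mul0mx !mulmx0 !addr0 !add0r => /eq_block_mx[e1 e2 e3 e4].
rewrite !(block_mxKul, block_mxKur, block_mxKdl, block_mxKdr).
split => //; first exact: hAB.
by apply: hBA.
Qed.


Lemma blk_mul a b (X Y : 'M[F]_(a + b)) :
  ursubmx X = 0 -> dlsubmx X = 0 -> ursubmx Y = 0 -> dlsubmx Y = 0 ->
  ulsubmx (X *m Y) = ulsubmx X *m ulsubmx Y /\
  drsubmx (X *m Y) = drsubmx X *m drsubmx Y.
Proof.
move=> x1 x2 y1 y2; rewrite -[X]submxK -[Y]submxK x1 x2 y1 y2 mulmx_block.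
by rewrite !mul0mx !mulmx0 !addr0 !add0r !block_mxKul !block_mxKdr.
Qed.

Lemma blk_unit a b (X : 'M[F]_(a + b)) :
  ursubmx X = 0 -> X \in unitmx -> ulsubmx X \in unitmx /\ drsubmx X \in unitmx.
Proof.
move=> x1; rewrite -[X in X \in unitmx]submxK x1 unitmxE det_lblock unitrM -!unitmxE.
by move/andP.
Qed.

Lemma cent_block a b (A : 'M[F]_a.+1) (B : 'M[F]_b) :
  A \in unitmx -> B \in unitmx ->
  (forall Z : 'M_(a.+1, b), A *m Z = Z *m B -> Z = 0) ->
  (forall Y : 'M_(b, a.+1), B *m Y = Y *m A -> Y = 0) ->
  (centc (block_mx A 0 0 B) %| centc A * centc B)%N.
Proof.
move=> Au Bu hAB hBA.
set T := block_mx A 0 0 B.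
have Tu : T \in unitmx by rewrite unitmxE det_ublock unitrM -!unitmxE Au Bu.
pose tG : {'GL_(a + b).+1[F]} := Sub (T : 'M_((a + b).+1)) Tu.
have -> : centc T = #|'C_(GLfull (a + b).+1 F)[tG]|%g by rewrite bridge.
set H := ('C_(GLfull (a + b).+1 F)[tG])%G.
have Hblk : forall x, x \in H ->
   [/\ ursubmx (GLval x : 'M_(a.+1 + b)) = 0, dlsubmx (GLval x : 'M_(a.+1 + b)) = 0,
    ulsubmx (GLval x : 'M_(a.+1 + b)) *m A = A *m ulsubmx (GLval x : 'M_(a.+1 + b))
    & drsubmx (GLval x : 'M_(a.+1 + b)) *m B = B *m drsubmx (GLval x : 'M_(a.+1 + b))].
  move=> x /setIP[_ /cent1P cx].
  apply: comm_block => //.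
  by move: cx; rewrite /commute => /(congr1 val).
pose f (x : {'GL_(a + b).+1[F]}) (w : 'M[F]_a.+1 * 'M[F]_b) :=
  (w.1 *m ulsubmx (GLval x : 'M_(a.+1 + b)), w.2 *m drsubmx (GLval x : 'M_(a.+1 + b))).
pose O := setX [set Y : 'M[F]_a.+1 | (Y \in unitmx) && (Y *m A == A *m Y)]
               [set Z : 'M[F]_b | (Z \in unitmx) && (Z *m B == B *m Z)].
have -> : (centc A * centc B = #|O|)%N by rewrite cardsX.
apply: (@semireg_dvd _ H _ f).
- move=> x y [w1 w2] xH yH; have [x1 x2 _ _] := Hblk x xH.
  have [y1 y2 _ _] := Hblk y yH.
  have [e1 e2] := blk_mul x1 x2 y1 y2.
  rewrite /f /=; congr (_, _); rewrite -mulmxA; congr (_ *m _).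
    exact: e1.
  exact: e2.
- move=> [w1 w2]; rewrite /f /=.
  have e := @scalar_mx_block F a.+1 b 1.
  have -> : ulsubmx (1%:M : 'M[F]_(a.+1 + b)) = 1%:M by rewrite e block_mxKul.
  have -> : drsubmx (1%:M : 'M[F]_(a.+1 + b)) = 1%:M by rewrite e block_mxKdr.
  by rewrite !mulmx1.
- move=> x [w1 w2] xH; have [x1 x2 x3 x4] := Hblk x xH.
  have [u1 u2] := blk_unit x1 (valP x).
  rewrite /O !inE /= => /andP[/andP[w1u /eqP c1] /andP[w2u /eqP c2]].
  rewrite !unitmx_mul w1u w2u u1 u2 /=.
  by rewrite -!mulmxA x3 x4 !mulmxA c1 c2 !eqxx.
- move=> x [w1 w2] xH; have [x1 x2 x3 x4] := Hblk x xH.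
  rewrite /O !inE /= => /andP[/andP[w1u _] /andP[w2u _]] [e1 e2].
  have ul1 : ulsubmx (GLval x : 'M_(a.+1 + b)) = 1%:M.
    by rewrite -(mulKmx w1u (ulsubmx (GLval x : 'M_(a.+1 + b)))) e1 mulVmx.
  have dr1 : drsubmx (GLval x : 'M_(a.+1 + b)) = 1%:M.
    by rewrite -(mulKmx w2u (drsubmx (GLval x : 'M_(a.+1 + b)))) e2 mulVmx.
  apply: val_inj => /=.
  have := submxK (GLval x : 'M_(a.+1 + b)).
  rewrite ul1 dr1 x1 x2 -scalar_mx_block => <-.
  by [].
Qed.

End Block.

Section Glc.
Variable F : finFieldType.

Lemma centc_scalar n (c : F) : centc (c%:M : 'M[F]_n) = glc F n.
Proof.
apply: eq_card => X; rewrite !inE scalar_mxC eqxx andbT //.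
Qed.

Lemma centc_dvd n (D : 'M[F]_n) : D \in unitmx -> (centc D %| glc F n)%N.
Proof.
case: n D => [|n] D Du.
  have -> : centc D = glc F 0; last exact: dvdnn.
  by apply: eq_card => X; rewrite !inE [X *m D]flatmx0 [D *m X]flatmx0 eqxx andbT.
pose dG : {'GL_n.+1[F]} := Sub (D : 'M_(n.+1)) Du.
have -> : centc D = #|'C_(GLfull n.+1 F)[dG]|%g by rewrite bridge.
rewrite -card_GLc; apply: cardSg; exact: subsetIl.
Qed.

End Glc.

End FileC.

Section FileD.
Set Implicit Arguments. Unset Strict Implicit. Unset Printing Implicit Defensive.
Local Open Scope ring_scope.

Section Irr.
Variable F : finFieldType.

Lemma det_expr n (A : 'M[F]_n) k : \det (A ^+ k) = \det A ^+ k.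
Proof.
elim: k => [|k IH]; first by rewrite !expr0 det1.
by rewrite !exprS -mulmxE det_mulmx IH.
Qed.

Lemma irr_fix N' (s : 'M[F]_N'.+1) (a : F) :
  s ^+ N'.+1 = a%:M ->
  (forall d (y : F), (0 < d < N'.+1)%N -> y ^+ N'.+1 != a ^+ d) ->
  forall (X : 'M[F]_N'.+1) (v : 'rV[F]_N'.+1),
    X *m s = s *m X -> v != 0 -> v *m X = v -> X = 1%:M.
Proof.
move=> sN hy X v cX v0 vX.
set K := kermx (X - 1%:M).
have vK : (v <= K)%MS by rewrite sub_kermx mulmxBr mulmx1 vX subrr.
have [dN|dN] := eqVneq (\rank K) N'.+1.
  move: dN; rewrite mxrank_ker => e.
  have : \rank (X - 1%:M) == 0%N.
    by move: (rank_leq_row (X - 1%:M)) e; case: (\rank _) => // r; lia.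
  by rewrite mxrank_eq0 subr_eq0 => /eqP.
have d0 : (0 < \rank K)%N.
  rewrite lt0n mxrank_eq0; apply/negP => /eqP K0.
  by move: vK; rewrite K0 submx0 (negPf v0).
have dlt : (\rank K < N'.+1)%N by rewrite ltn_neqAle dN rank_leq_col.
set B := row_base K.
have BK : (B :=: K)%MS := eq_row_base K.
have Bs : (B *m s <= B)%MS.
  have e : s *m (X - 1%:M) = (X - 1%:M) *m s.
    by rewrite mulmxBr mulmxBl mulmx1 mul1mx cX.
  rewrite BK sub_kermx -mulmxA e mulmxA.
  have : (B <= K)%MS by rewrite BK.
  by rewrite sub_kermx => /eqP ->; rewrite mul0mx.
have [S' eS] := submxP Bs.
have ek : forall k, B *m s ^+ k = S' ^+ k *m B.
  elim=> [|k IH]; first by rewrite !expr0 mulmx1 mul1mx.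
  by rewrite !exprSr -!mulmxE mulmxA IH -mulmxA eS mulmxA.
have := ek N'.+1; rewrite sN mul_mx_scalar -mul_scalar_mx.
move/(row_free_inj (row_base_free K)) => e.
have := hy (\rank K) (\det S'); rewrite d0 dlt /= -det_expr -e det_scalar.
by rewrite eqxx => /(_ isT).
Qed.

End Irr.

Section Irr2.
Variable F : finFieldType.

Lemma cent_irr N' (s : 'M[F]_N'.+1) (a : F) :
  s \in unitmx ->
  s ^+ N'.+1 = a%:M ->
  (forall d (y : F), (0 < d < N'.+1)%N -> y ^+ N'.+1 != a ^+ d) ->
  (centc s %| #|F| ^ N'.+1 - 1)%N.
Proof.
move=> su sN hy.
pose sG : {'GL_N'.+1[F]} := Sub (s : 'M_(N'.+1)) su.
have -> : centc s = #|'C_(GLfull N'.+1 F)[sG]|%g by rewrite bridge.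
set H := ('C_(GLfull N'.+1 F)[sG])%G.
pose f (x : {'GL_N'.+1[F]}) (v : 'rV[F]_N'.+1) := v *m GLval x.
pose O := [set~ (0 : 'rV[F]_N'.+1)].
have -> : (#|F| ^ N'.+1 - 1 = #|O|)%N.
  by rewrite cardsC1 card_mx mul1n subn1.
apply: (@semireg_dvd _ H _ f).
- by move=> x y v _ _; rewrite /f GL_MxE mulmxA.
- by move=> v; rewrite /f /= mulmx1.
- move=> x v _; rewrite !in_setC1 /f; apply: contra => /eqP e.
  by rewrite -(mulmxK (valP x) v) e mul0mx.
move=> x v /setIP[_ /cent1P cx]; rewrite in_setC1 /f => v0 vx.
apply: val_inj => /=.
apply: (irr_fix sN hy _ v0 vx).
by move: cx; rewrite /commute => /(congr1 val).
Qed.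

End Irr2.

Section Sylv.
Variable F : finFieldType.

Lemma sylv N n (s : 'M[F]_N) (D : 'M[F]_n) (a : F) (lam : 'rV[F]_n) k :
  s ^+ k = a%:M -> D ^+ k = diag_mx lam -> (forall j, lam 0 j != a) ->
  (forall Z : 'M_(N, n), s *m Z = Z *m D -> Z = 0) /\
  (forall Y : 'M_(n, N), D *m Y = Y *m s -> Y = 0).
Proof.
move=> sk Dk hl; split.
  move=> Z e.
  have ei : forall i, s ^+ i *m Z = Z *m D ^+ i.
    elim=> [|i IH]; first by rewrite !expr0 mulmx1 mul1mx.
    by rewrite !exprS -!mulmxE -mulmxA IH mulmxA e -mulmxA.
  have := ei k; rewrite sk Dk mul_scalar_mx mul_mx_diag => /matrixP eZ.
  apply/matrixP => i j; have := eZ i j; rewrite !mxE => /eqP.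
  rewrite [Z i j * _]mulrC -subr_eq0 -mulrBl mulf_eq0 subr_eq0 eq_sym.
  by rewrite (negPf (hl j)) /= => /eqP.
move=> Y e.
have ei : forall i, D ^+ i *m Y = Y *m s ^+ i.
  elim=> [|i IH]; first by rewrite !expr0 mulmx1 mul1mx.
  by rewrite !exprS -!mulmxE -mulmxA IH mulmxA e -mulmxA.
have := ei k; rewrite sk Dk mul_mx_scalar mul_diag_mx => /matrixP eZ.
apply/matrixP => i j; have := eZ i j; rewrite !mxE => /eqP.
rewrite -subr_eq0 -mulrBl mulf_eq0 subr_eq0 (negPf (hl i)) /=.
by move/eqP.
Qed.

End Sylv.

End FileD.

Section FileE.
Set Implicit Arguments. Unset Strict Implicit. Unset Printing Implicit Defensive.
Local Open Scope ring_scope.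

Section Smx.
Variable F : finFieldType.
Variable N' : nat.
Variable a : F.

Definition smx : 'M[F]_N'.+1 := \matrix_(i, j)
  (if i == ord_max then (if j == 0 then a else 0) else ((i.+1 == j)%N)%:R).

Let e (i : 'I_N'.+1) : 'rV[F]_N'.+1 := delta_mx 0 i.

Lemma e_step (i : 'I_N'.+1) : (i < N')%N -> e i *m smx = e (inord i.+1).
Proof.
move=> iN; rewrite /e -rowE; apply/rowP => j; rewrite !mxE.
have -> : (i == ord_max) = false.
  by apply/negbTE; rewrite -val_eqE /=; lia.
rewrite eqxx /= -val_eqE /= inordK; last by lia.
by rewrite eq_sym.
Qed.

Lemma e_last : e ord_max *m smx = a *: e 0.
Proof.
rewrite /e -rowE; apply/rowP => j; rewrite !mxE eqxx /=.
by case: (j == 0); rewrite ?mulr1 ?mulr0.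
Qed.

Lemma e_pow k (i : 'I_N'.+1) : (i + k <= N')%N -> e i *m smx ^+ k = e (inord (i + k)).
Proof.
elim: k i => [|k IH] i ik.
  by rewrite expr0 mulmx1 addn0 /e; congr delta_mx; apply: val_inj; rewrite /= inordK.
rewrite exprS -mulmxE mulmxA e_step; last by lia.
rewrite IH; last by rewrite inordK; lia.
by rewrite inordK ?addSnnS //; lia.
Qed.

Lemma smx_pow : smx ^+ N'.+1 = a%:M.
Proof.
apply/row_matrixP => i; rewrite !rowE.
have -> : smx ^+ N'.+1 = smx ^+ (N' - i) * smx ^+ 1 * smx ^+ i.
  by rewrite -!exprD; congr (_ ^+ _); have := ltn_ord i; lia.
rewrite expr1 -!mulmxE !mulmxA.
rewrite e_pow; last by have := ltn_ord i; lia.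
have -> : (inord (i + (N' - i)) : 'I_N'.+1) = ord_max.
  by apply: val_inj; rewrite /= inordK; have := ltn_ord i; lia.
rewrite e_last -scalemxAl.
rewrite (@e_pow i 0); last by have := ltn_ord i; rewrite /=; lia.
by rewrite add0n inord_val mul_mx_scalar.
Qed.

End Smx.

End FileE.

Section FileN.
Set Implicit Arguments. Unset Strict Implicit. Unset Printing Implicit Defensive.

Lemma sum_ge_const (s : seq nat) (f : nat -> nat) c :
  (forall i, i \in s -> c <= f i) ->
  \sum_(i <- s) f i = c * size s + \sum_(i <- s) (f i - c).
Proof.
elim: s => [|x s IH] h; first by rewrite !big_nil muln0.
rewrite !big_cons IH; last by move=> i ins; apply: h; rewrite inE ins orbT.
have := h x (mem_head _ _); rewrite /=; lia.
Qed.

Lemma sum_ge1 (s : seq nat) (g : nat -> nat) j :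
  j \in s -> uniq s -> g j <= \sum_(i <- s) g i.
Proof. by move=> js us; rewrite (bigD1_seq j) //= leq_addr. Qed.

Lemma sum_ge2 (s : seq nat) (g : nat -> nat) j j' :
  j \in s -> j' \in s -> j != j' -> uniq s -> g j + g j' <= \sum_(i <- s) g i.
Proof.
move=> js js' jj us; rewrite (bigD1_seq j) //= leq_add2l -big_filter.
apply: sum_ge1; last exact: filter_uniq.
by rewrite mem_filter eq_sym jj.
Qed.

Section Num.
Variables (q l : nat).
Hypothesis hq : 1 < q.
Hypothesis hl : prime l.
Hypothesis hdiv : l %| q - 1.

Definition v i := logn l (q ^ i - 1).
Definition V n := \sum_(1 <= i < n.+1) v i.

Lemma qi_pos i : 0 < i -> 0 < q ^ i - 1.
Proof.
move=> i0; rewrite subn_gt0 (leq_trans hq) //.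
by rewrite -{1}(expn1 q) leq_pexp2l // ltnW.
Qed.

Lemma dvd_qpow d j : d %| j -> q ^ d - 1 %| q ^ j - 1.
Proof.
case/dvdnP => c ->; rewrite mulnC expnM !subn1; exact: dvdn_pred_predX.
Qed.

Lemma v_mono d j : 0 < j -> d %| j -> v d <= v j.
Proof. by move=> j0 dj; apply: dvdn_leq_log; [exact: qi_pos | exact: dvd_qpow]. Qed.

Lemma v1_le i : 0 < i -> v 1 <= v i.
Proof. by move=> i0; apply: v_mono; rewrite ?dvd1n. Qed.

Lemma window1 r N j : r < j <= r + N ->
  v j + (N - 1) * v 1 <= \sum_(r.+1 <= i < (r + N).+1) v i.
Proof.
move=> hj; rewrite (sum_ge_const (c := v 1)); last first.
  by move=> i; rewrite mem_index_iota => hi; apply: v1_le; lia.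
rewrite size_iota.
have : v j - v 1 <= \sum_(i <- index_iota r.+1 (r + N).+1) (v i - v 1).
  apply: sum_ge1; last exact: iota_uniq.
  by rewrite mem_index_iota; lia.
have := v1_le (i := j); have : 0 < j by lia.
move=> j0 /(_ j0); rewrite subSS addKn; nia.
Qed.

Lemma window2 r N j j' : r < j <= r + N -> r < j' <= r + N -> j != j' ->
  v j + v j' + (N - 2) * v 1 <= \sum_(r.+1 <= i < (r + N).+1) v i.
Proof.
move=> hj hj' jj; rewrite (sum_ge_const (c := v 1)); last first.
  by move=> i; rewrite mem_index_iota => hi; apply: v1_le; lia.
rewrite size_iota.
have : (v j - v 1) + (v j' - v 1) <= \sum_(i <- index_iota r.+1 (r + N).+1) (v i - v 1).
  apply: (@sum_ge2 _ (fun i => v i - v 1)) => //; last exact: iota_uniq.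
    by rewrite mem_index_iota; lia.
  by rewrite mem_index_iota; lia.
have := v1_le (i := j); have : 0 < j by lia.
have := v1_le (i := j'); have : 0 < j' by lia.
move=> j0 /(_ j0) h1 j0' /(_ j0') h2; rewrite subSS addKn; nia.
Qed.

Lemma V_split n N : V (n + N) = V n + \sum_(n.+1 <= i < (n + N).+1) v i.
Proof. by rewrite /V (@big_cat_nat _ _ _ n.+1) //; lia. Qed.

Lemma logn_q : logn l q = 0.
Proof.
apply: logn_coprime; rewrite prime_coprime //; apply/negP => lq.
have : l %| 1.
  by rewrite -(subnK (ltnW hq)) in lq; rewrite (dvdn_addr 1 hdiv) in lq.
by rewrite dvdn1 => /eqP l1; move: hl; rewrite l1.
Qed.

Lemma logn_GLformula n :
  logn l (q ^ 'C(n, 2) * \prod_(1 <= i < n.+1) (q ^ i - 1)) = V n.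
Proof.
have qp : 0 < q by lia.
rewrite lognM ?expn_gt0 ?qp //; last first.
  by rewrite big_nat; apply: prodn_cond_gt0 => i /andP[i0 _]; exact: qi_pos.
rewrite lognX logn_q muln0 add0n /V.
elim: n => [|n IH]; first by rewrite !big_nil logn1.
rewrite big_nat_recr // [in RHS]big_nat_recr //= lognM ?IH //; last exact: qi_pos.
by rewrite big_nat; apply: prodn_cond_gt0 => i /andP[i0 _]; exact: qi_pos.
Qed.

End Num.

Section Num2.
Variables (q : nat).
Hypothesis hq : 1 < q.
Hypothesis hdiv : 2 %| q - 1.

Lemma q_odd : odd q.
Proof.
have : odd ((q - 1) + 1) by rewrite oddD addbT -dvdn2 hdiv.
by rewrite subnK // ltnW.
Qed.

Lemma v2_lt_v4 : v q 2 2 < v q 2 4.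
Proof.
rewrite /v.
have -> : q ^ 4 - 1 = (q ^ 2 - 1) * (q ^ 2 + 1).
  have -> : q ^ 4 = q ^ 2 * q ^ 2 by rewrite -expnD.
  have : 1 <= q ^ 2 by rewrite expn_gt0; lia.
  set x := q ^ 2; nia.
rewrite lognM; last by rewrite addn1.
  rewrite -[X in X < _]addn0 ltn_add2l logn_gt0 mem_primes /=.
  by rewrite addn1 /= dvdn2 /= oddX q_odd.
exact: (qi_pos hq).
Qed.

Lemma v3_eq : v q 2 3 = v q 2 1.
Proof.
rewrite /v expn1.
have -> : q ^ 3 - 1 = (q - 1) * (q ^ 2 + q + 1).
  have -> : q ^ 3 = q * q * q by rewrite !expnS expn0 muln1 mulnA.
  have -> : q ^ 2 = q * q by rewrite !expnS expn0 muln1.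
  have : 1 <= q by lia.
  nia.
rewrite mulnC logn_Gauss // prime_coprime // dvdn2 /= !oddD oddX q_odd.
by [].
Qed.

End Num2.

Section Num3.
Variables (q l : nat).
Hypothesis hq : 1 < q.
Hypothesis hl : prime l.
Hypothesis hdiv : l %| q - 1.

Lemma windowN r N : 0 < N ->
  v q l N + (N - 1) * v q l 1 <= \sum_(r.+1 <= i < (r + N).+1) v q l i.
Proof.
move=> N0; set j := N * (r %/ N).+1.
have hj : r < j <= r + N.
  rewrite /j mulnS; have := divn_eq r N; have := ltn_pmod r N0; nia.
apply: leq_trans (window1 hq hl hdiv hj); rewrite leq_add2r.
apply: (v_mono l hq); [lia | exact: dvdn_mulr].
Qed.

Lemma window4 r : l = 2 ->
  2 * v q l 1 + v q l 2 + v q l 4 <= \sum_(r.+1 <= i < (r + 4).+1) v q l i.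
Proof.
move=> l2.
set j0 := r + 4 - r %% 4.
set j2 := if r %% 4 < 2 then r + 2 - r %% 4 else r + 6 - r %% 4.
have h0 : r < j0 <= r + 4 by rewrite /j0; lia.
have h2 : r < j2 <= r + 4 by rewrite /j2; case: ifP; lia.
have ne : j0 != j2 by rewrite /j0 /j2; case: ifP; lia.
have d0 : 4 %| j0 by rewrite /j0; lia.
have d2 : 2 %| j2 by rewrite /j2; case: ifP; lia.
apply: leq_trans (window2 hq hl hdiv h0 h2 ne).
have p0 : 0 < j0 by lia.
have p2 : 0 < j2 by lia.
have := v_mono l hq p0 d0; have := v_mono l hq p2 d2; lia.
Qed.

End Num3.

End FileN.

Section FileG.
Set Implicit Arguments. Unset Strict Implicit. Unset Printing Implicit Defensive.
Local Open Scope ring_scope.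

Section Fin.
Variable F : finFieldType.

Lemma idx_bound (l M' K : nat) (t : {'GL_M'.+1[F]}) :
  prime l -> (0 < K)%N -> (#|'C_(GLfull M'.+1 F)[t]|%g %| K)%N ->
  (logn l (glc F M'.+1) - logn l K <= logn l #|GLfull M'.+1 F : 'C_(GLfull M'.+1 F)[t]|%g)%N.
Proof.
move=> pl K0 dK.
have L : (#|'C_(GLfull M'.+1 F)[t]|%g * #|GLfull M'.+1 F : 'C_(GLfull M'.+1 F)[t]|%g)%N
   = glc F M'.+1.
  by rewrite -card_GLc Lagrange // subsetIl.
have i0 := indexg_gt0 (GLfull M'.+1 F) 'C_(GLfull M'.+1 F)[t]%g.
have c0 := cardG_gt0 ('C_(GLfull M'.+1 F)[t])%G.
have := dvdn_leq_log l K0 dK.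
move: L dK i0 c0; set c := #|_|; set i := #|_ : _|%g => L dK i0 c0.
rewrite -L lognM //; lia.
Qed.

Lemma elt_of (l E M' : nat) (t : {'GL_M'.+1[F]}) :
  prime l -> (GLval t) ^+ (l ^ E) = 1 -> (l.-elt t)%g.
Proof.
move=> pl tE; rewrite /p_elt; apply: (@pnat_dvd _ (l ^ E)).
  rewrite order_dvdn; apply/eqP; apply: val_inj.
  by rewrite /= FinRing.val_unitX tE.
by rewrite pnatX pnat_id.
Qed.

Lemma logn_glc (l n : nat) : prime l -> (l %| #|F| - 1)%N ->
  logn l (glc F n) = V #|F| l n.
Proof.
move=> pl hd; case: n => [|n].
  rewrite /V big_nil.
  have -> : glc F 0 = 1%N.
    rewrite /glc (_ : [set X : 'M[F]_0 | X \in unitmx] = setT).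
      by rewrite cardsT card_mx.
    by apply/setP => X; rewrite !inE unitmxE det_mx00 unitr1.
  by rewrite logn1.
rewrite -card_GLc cardsT -cardsT card_GL //.
apply: logn_GLformula => //; exact: finNzRing_gt1.
Qed.

End Fin.

Section Core.
Variable F : finFieldType.

Lemma block_pow a b (A : 'M[F]_a) (B : 'M[F]_b) k :
  (block_mx A 0 0 B) ^+ k = block_mx (A ^+ k) 0 0 (B ^+ k) :> 'M_(a + b).
Proof.
elim: k => [|k IH]; first by rewrite !expr0 -scalar_mx_block.
rewrite !exprS IH -!mulmxE mulmx_block.
by rewrite !mul0mx !mulmx0 !addr0 !add0r.
Qed.

Lemma core (l E N' n K : nat) (s : 'M[F]_N'.+1) (D : 'M[F]_n) (a : F) (lam : 'rV[F]_n) :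
  prime l ->
  s \in unitmx -> s ^+ N'.+1 = a%:M ->
  (forall d (y : F), (0 < d < N'.+1)%N -> y ^+ N'.+1 != a ^+ d) ->
  D \in unitmx -> D ^+ N'.+1 = diag_mx lam -> (forall j, lam 0 j != a) ->
  s ^+ (l ^ E) = 1 -> D ^+ (l ^ E) = 1 ->
  (0 < K)%N -> (centc D %| K)%N ->
  exists t : {'GL_(N' + n).+1[F]},
   [/\ (l.-elt t)%g, \det (GLval t) = \det s * \det D &
     (logn l (glc F (N' + n).+1) - (logn l (#|F| ^ N'.+1 - 1) + logn l K)
        <= logn l #|GLfull (N' + n).+1 F : 'C_(GLfull (N' + n).+1 F)[t]|%g)%N].
Proof.
move=> pl su sN hy Du DN hlam sE DE K0 dK.
set T := block_mx s 0 0 D.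
have Tu : T \in unitmx by rewrite unitmxE det_ublock unitrM -!unitmxE su Du.
pose tG : {'GL_(N' + n).+1[F]} := Sub (T : 'M_((N' + n).+1)) Tu.
exists tG; split.
- apply: (@elt_of _ l E) => //.
  have -> : GLval tG ^+ (l ^ E) = T ^+ (l ^ E) by [].
  by rewrite block_pow sE DE -scalar_mx_block.
- have -> : \det (GLval tG) = \det T by [].
  exact: det_ublock.
have [h1 h2] := sylv sN DN hlam.
have q1 : (0 < #|F| ^ N'.+1 - 1)%N by apply: qi_pos; [exact: finNzRing_gt1|].
rewrite -lognM //; apply: idx_bound; rewrite ?muln_gt0 ?q1 ?K0 //.
rewrite bridge.
have -> : centc (GLval tG) = centc T by [].
apply: dvdn_trans (cent_block su Du h1 h2) _.
apply: dvdn_mul => //; exact: cent_irr su sN hy.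
Qed.

End Core.

End FileG.

Section FileH.
Set Implicit Arguments. Unset Strict Implicit. Unset Printing Implicit Defensive.
Local Open Scope ring_scope.

Section Roots.
Variable F : finFieldType.

Lemma prim_exists : exists z : F, (#|F| - 1).-primitive_root z.
Proof.
have q1 : (1 < #|F|)%N := finNzRing_gt1 F.
pose rs := enum (predC1 (0 : F)).
have : has (#|F| - 1).-primitive_root rs.
  apply: has_prim_root.
  - lia.
  - apply/allP => x; rewrite mem_enum /= => x0.
    rewrite unity_rootE; apply/eqP; apply: (mulIf x0).
    rewrite -exprSr subn1 prednK; [by rewrite expf_card mul1r | exact: ltnW q1].
  - exact: enum_uniq.
  by rewrite -cardE cardC1 subn1.
by case/hasP => z _ hz; exists z.
Qed.

Variables (l b : nat).
Hypothesis hl : prime l.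
Hypothesis hdiv : (l %| #|F| - 1)%N.
Hypothesis hb : b = logn l (#|F| - 1).

Lemma a_exists : exists a : F, (l ^ b).-primitive_root a.
Proof.
have [z hz] := prim_exists; exists (z ^+ ((#|F| - 1) %/ l ^ b)).
by apply: dvdn_prim_root => //; rewrite hb pfactor_dvdnn.
Qed.

Lemma b_gt0 : (0 < b)%N.
Proof.
rewrite hb -(pfactor_dvdn 1 hl) ?expn1 //.
have : (1 < #|F|)%N := finNzRing_gt1 F; lia.
Qed.

Variable a : F.
Hypothesis ha : (l ^ b).-primitive_root a.

Lemma a_neq0 : a != 0.
Proof.
apply/negP => /eqP a0; have := prim_expr_order ha; rewrite a0 expr0n.
by rewrite expn_eq0 (negPf (lt0n_neq0 (prime_gt0 hl))) /= => /eqP; rewrite eq_sym oner_eq0.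
Qed.

Lemma nonpow (y : F) : y ^+ l != a.
Proof.
apply/eqP => ya.
have y0 : y != 0.
  by apply/eqP => y0; move: a_neq0; rewrite -ya y0 expr0n (negPf (lt0n_neq0 (prime_gt0 hl))) eqxx.
have yq : y ^+ (#|F| - 1) = 1.
  apply: (mulIf y0); rewrite -exprSr subn1 prednK; first by rewrite expf_card mul1r.
  exact: ltnW (finNzRing_gt1 F).
have hq1 : (0 < #|F| - 1)%N by have : (1 < #|F|)%N := finNzRing_gt1 F; lia.
have [k hk kd] := prim_order_exists hq1 yq.
have yl : y ^+ (l ^ b.+1) = 1 by rewrite expnSr mulnC exprM ya prim_expr_order.
have : (k %| l ^ b.+1)%N by rewrite (prim_order_dvd hk) yl.
case/(dvdn_pfactor _ _ hl) => j jb kj; rewrite kj in hk kd.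
have jb' : (j <= b)%N by rewrite hb -pfactor_dvdn //; have : (1 < #|F|)%N := finNzRing_gt1 F; lia.
have : (l ^ b %| l ^ b.-1)%N.
  rewrite (prim_order_dvd ha) -ya -exprM -expnS prednK ?b_gt0 //.
  by rewrite -(prim_order_dvd hk) dvdn_exp2l.
rewrite dvdn_Pexp2l ?prime_gt1 //; have := b_gt0; lia.
Qed.

End Roots.

Section Hyps.
Variable F : finFieldType.

Lemma pow_root N d (a y : F) : (0 < N)%N -> coprime N d -> a != 0 ->
  y ^+ N = a ^+ d -> exists w : F, w ^+ N = a.
Proof.
move=> N0 cNd a0 ya.
have [u _ hu] := Bezoutl d N0.
rewrite (eqP cNd) in hu.
have [v hv] := dvdnP hu.
have y0 : y != 0.
  apply/eqP => y0; move: ya; rewrite y0 expr0n (negPf (lt0n_neq0 N0)) => /esym/eqP.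
  by rewrite expf_eq0 (negPf a0) andbF.
exists (a ^+ v / y ^+ u).
have e1 : (a ^+ v) ^+ N = a * (y ^+ u) ^+ N.
  by rewrite -exprM -hv exprD expr1 mulnC exprM -ya -!exprM mulnC.
rewrite exprMn exprVn e1 mulfK // expf_neq0 // expf_neq0 //.
Qed.

End Hyps.

Section Hyps2.
Variable F : finFieldType.
Variables (l b : nat).
Hypothesis hl : prime l.
Hypothesis hdiv : (l %| #|F| - 1)%N.
Hypothesis hb : b = logn l (#|F| - 1).
Variable a : F.
Hypothesis ha : (l ^ b).-primitive_root a.

Lemma hyp_l d (y : F) : (0 < d < l)%N -> y ^+ l != a ^+ d.
Proof.
move=> /andP[d0 dl]; apply/eqP => e.
have cop : coprime l d.
  rewrite prime_coprime //; apply/negP => /(dvdn_leq d0); lia.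
have [w hw] := pow_root (prime_gt0 hl) cop (a_neq0 hl ha) e.
by have := nonpow hl hdiv hb ha w; rewrite hw eqxx.
Qed.

Lemma hyp_4 d (y : F) : l = 2%N -> (2 <= b)%N -> (0 < d < 4)%N -> y ^+ 4 != a ^+ d.
Proof.
move=> l2 b2 hd; apply/eqP => e.
have np := nonpow hl hdiv hb ha.
rewrite l2 in np.
have a0 := a_neq0 hl ha.
have [d2|d2] := eqVneq d 2%N.
  subst d.
  set x := a ^+ (2 ^ b.-1).
  have x2 : x ^+ 2 = 1.
    rewrite /x -exprM -expnSr prednK; last by lia.
    by have := prim_expr_order ha; rewrite l2.
  have x1 : x != 1.
    apply/eqP => x1; have := prim_order_dvd ha (2 ^ b.-1).
    rewrite -/x x1 eqxx l2 dvdn_Pexp2l //; lia.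
  have xm1 : x = -1.
    by move/eqP: x2; rewrite sqrf_eq1 (negPf x1) /= => /eqP.
  set i := a ^+ (2 ^ (b - 2)).
  have i2 : i ^+ 2 = -1.
    rewrite -xm1 /i -exprM -expnSr /x; congr (_ ^+ (2 ^ _)); lia.
  have : (y ^+ 2) ^+ 2 == a ^+ 2 by rewrite -exprM e.
  rewrite eqf_sqr => /orP[/eqP ya|/eqP ya].
    by have := np y; rewrite ya eqxx.
  have := np (i * y); rewrite exprMn ya i2 mulrN mulNr mul1r opprK eqxx //.
have cop : coprime 4 d by move: hd d2; clear e; case: d => [|[|[|[|]]]].
have [w hw] := pow_root (isT : (0 < 4)%N) cop a0 e.
by have := np (w ^+ 2); rewrite -exprM hw eqxx.
Qed.

End Hyps2.

End FileH.

Section FileI.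
Set Implicit Arguments. Unset Strict Implicit. Unset Printing Implicit Defensive.
Local Open Scope ring_scope.

Section Mats.
Variable F : finFieldType.

Lemma scalar_pow n (c : F) k : (c%:M : 'M[F]_n) ^+ k = (c ^+ k)%:M.
Proof.
elim: k => [|k IH]; first by rewrite !expr0.
by rewrite !exprS IH -mulmxE -scalar_mxM.
Qed.

Lemma smx_unit N' (a : F) : a != 0 -> smx N' a \in unitmx.
Proof.
move=> a0; rewrite unitmxE unitfE; apply/eqP => d0.
have := det_expr (smx N' a) N'.+1; rewrite smx_pow det_scalar d0 expr0n /=.
by move/eqP; rewrite expf_eq0 (negPf a0) andbF.
Qed.

Lemma diag_pow n (d : 'rV[F]_n) k : diag_mx d ^+ k = diag_mx (\row_j (d 0 j ^+ k)).
Proof.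
elim: k => [|k IH].
  by rewrite expr0; apply/matrixP => i j; rewrite !mxE expr0.
rewrite exprS IH -mulmxE mulmx_diag; congr diag_mx; apply/rowP => j.
by rewrite !mxE exprS.
Qed.

Lemma glc_gt0 n : (0 < glc F n)%N.
Proof. by apply/card_gt0P; exists 1%:M; rewrite inE unitmx1. Qed.

End Mats.

Section Delta.
Variable F : finFieldType.

Lemma delta_case (l b E N' n : nat) (a c : F) :
  prime l -> (l %| #|F| - 1)%N -> (l ^ b).-primitive_root a -> (0 < N')%N ->
  (forall d (y : F), (0 < d < N'.+1)%N -> y ^+ N'.+1 != a ^+ d) ->
  (l ^ E = N'.+1 * l ^ b)%N -> c ^+ (l ^ E) = 1 ->
  exists t : {'GL_(N' + n).+1[F]},
   [/\ (l.-elt t)%g,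
       \det (GLval t) = \det (smx N' a) * \prod_(j < n) (if j == 0 :> nat then c else 1) &
       (V #|F| l (N' + n).+1 - (v #|F| l N'.+1 + V #|F| l n)
          <= logn l #|GLfull (N' + n).+1 F : 'C_(GLfull (N' + n).+1 F)[t]|%g)%N].
Proof.
move=> pl hd ha N0 hy hE cE.
have h1 : (0 < 1 < N'.+1)%N by rewrite /= ltnS.
have a0 : a != 0 := a_neq0 pl ha.
have c0 : c != 0.
  apply/eqP => c0; move: cE; rewrite c0 expr0n expn_eq0.
  by rewrite (negPf (lt0n_neq0 (prime_gt0 pl))) /= => /eqP; rewrite eq_sym oner_eq0.
pose dl : 'rV[F]_n := \row_j (if j == 0 :> nat then c else 1).
have dlj : forall j, dl 0 j = if j == 0 :> nat then c else 1 by move=> j; rewrite mxE.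
have Du : diag_mx dl \in unitmx.
  rewrite unitmxE det_diag unitfE; apply/prodf_neq0 => j _; rewrite dlj.
  by case: ifP => _; rewrite ?oner_eq0.
have hlam : forall j, (\row_j (dl 0 j ^+ N'.+1)) 0 j != a.
  move=> j; rewrite mxE dlj; case: ifP => _.
    by have := hy 1%N c h1; rewrite expr1.
  by have := hy 1%N 1 h1; rewrite expr1 expr1n.
have sE : smx N' a ^+ (l ^ E) = 1.
  by rewrite hE exprM smx_pow scalar_pow (prim_expr_order ha).
have DE : diag_mx dl ^+ (l ^ E) = 1.
  rewrite diag_pow; apply/matrixP => i j; rewrite !mxE.
  by case: ifP => _; rewrite ?cE ?expr1n.
have [t [te td tl]] := @core F l E N' n (glc F n) (smx N' a) (diag_mx dl) a
   (\row_j (dl 0 j ^+ N'.+1)) pl (smx_unit N' a0) (smx_pow N' a) hy Du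
   (diag_pow dl N'.+1) hlam sE DE (glc_gt0 F n) (centc_dvd Du).
exists t; split => //.
  by rewrite td det_diag; congr (_ * _); apply: eq_bigr => j _; rewrite dlj.
by move: tl; rewrite !logn_glc.
Qed.

End Delta.

Section Nested.
Variable F : finFieldType.

Lemma nested_case (k r : nat) (a : F) : (2 %| #|F| - 1)%N ->
  (2 ^ 1).-primitive_root a ->
  (forall d (y : F), (0 < d < 2)%N -> y ^+ 2 != a ^+ d) ->
  exists t : {'GL_(1 + (k.+1 + r)).+1[F]},
   [/\ (2.-elt t)%g,
       \det (GLval t) = \det (smx 1 a) * (-1) ^+ k.+1 &
       (V #|F| 2 (1 + (k.+1 + r)).+1 - (v #|F| 2 2 + (V #|F| 2 k.+1 + V #|F| 2 r))
          <= logn 2 #|GLfull (1 + (k.+1 + r)).+1 F : 'C_(GLfull (1 + (k.+1 + r)).+1 F)[t]|%g)%N].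
Proof.
move=> hd ha hy.
have a0 : a != 0 := a_neq0 (isT : prime 2) ha.
have a2 : a ^+ 2 = 1 by have := prim_expr_order ha.
have a1 : a != 1.
  apply/eqP => a1; have := prim_order_dvd ha 1; rewrite a1 expr1 eqxx.
  by rewrite dvdn1.
have am1 : a = -1 by move/eqP: a2; rewrite sqrf_eq1 (negPf a1) /= => /eqP.
have m1 : (1 : F) != -1 by rewrite -am1 eq_sym.
pose D : 'M[F]_(k.+1 + r) := block_mx (-1)%:M 0 0 1%:M.
have Du : D \in unitmx.
  by rewrite unitmxE det_ublock !det_scalar unitfE mulf_neq0 ?expf_neq0 ?oppr_eq0 ?oner_eq0.
have D2 : D ^+ 2 = 1.
  by rewrite block_pow !scalar_pow expr1n sqrrN expr1n -scalar_mx_block.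
have zz : forall p1 p2 (Z : 'M[F]_(p1, p2)), Z = - Z -> Z = 0.
  move=> p1 p2 Z e; apply/matrixP => i j; move/matrixP: e => /(_ i j); rewrite !mxE.
  move/eqP; rewrite -addr_eq0 -mulr2n -mulr_natr mulf_eq0 => /orP[/eqP //|].
  by rewrite -addr_eq0 eq_sym in m1 *; rewrite (negPf m1).
have h1 : forall Z : 'M[F]_(k.+1, r), (-1)%:M *m Z = Z *m 1%:M -> Z = 0.
  by move=> Z; rewrite mul_scalar_mx mulmx1 scaleN1r => /esym; exact: zz.
have h2 : forall Y : 'M[F]_(r, k.+1), 1%:M *m Y = Y *m (-1)%:M -> Y = 0.
  by move=> Y; rewrite mul1mx mul_mx_scalar scaleN1r; exact: zz.
have dK : (centc D %| glc F k.+1 * glc F r)%N.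
  have u1 : ((-1)%:M : 'M[F]_k.+1) \in unitmx.
    by rewrite unitmxE det_scalar unitfE expf_neq0 // oppr_eq0 oner_eq0.
  have u2 : (1%:M : 'M[F]_r) \in unitmx := unitmx1 _ _.
  by have := cent_block u1 u2 h1 h2; rewrite !centc_scalar.
have hlam : forall j, (const_mx 1 : 'rV[F]_(k.+1 + r)) 0 j != a.
  by move=> j; rewrite mxE am1.
have sE : smx 1 a ^+ (2 ^ 2) = 1.
  by rewrite (_ : 2 ^ 2 = 2 * 2)%N // exprM smx_pow scalar_pow a2.
have DE : D ^+ (2 ^ 2) = 1 by rewrite (_ : 2 ^ 2 = 2 * 2)%N // exprM D2 expr1n.
have DN : D ^+ 2 = diag_mx (const_mx 1) by rewrite D2 diag_const_mx.
have Kp : (0 < glc F k.+1 * glc F r)%N by rewrite muln_gt0 !glc_gt0.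
have [t [te td tl]] := @core F 2 2 1 (k.+1 + r) (glc F k.+1 * glc F r) (smx 1 a) D a
   (const_mx 1) (isT : prime 2) (smx_unit 1 a0) (smx_pow 1 a) hy Du
   DN hlam sE DE Kp dK.
exists t; split => //.
  by rewrite td det_ublock !det_scalar expr1n mulr1.
by move: tl; rewrite lognM ?glc_gt0 // !logn_glc.
Qed.

End Nested.

End FileI.

Section FileJ.
Set Implicit Arguments. Unset Strict Implicit. Unset Printing Implicit Defensive.
Local Open Scope ring_scope.

Lemma pp_le (l b x : nat) : prime l -> (b <= logn l x)%N -> (l ^ b <= x`_l)%N.
Proof. by move=> pl h; rewrite p_part leq_pexp2l // prime_gt0. Qed.

Lemma pp_lt (l b x : nat) : prime l -> (b < logn l x)%N -> (l ^ b < x`_l)%N.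
Proof. by move=> pl h; rewrite p_part ltn_exp2l // prime_gt1. Qed.

Section Finish.
Variable F : finFieldType.

Lemma finish_delta (l b E N' n : nat) (a : F) :
  prime l -> (l %| #|F| - 1)%N -> (l ^ b).-primitive_root a -> (0 < N')%N ->
  (forall d (y : F), (0 < d < N'.+1)%N -> y ^+ N'.+1 != a ^+ d) ->
  (l ^ E = N'.+1 * l ^ b)%N ->
  (b + v #|F| l N'.+1 + V #|F| l n <= V #|F| l (N' + n).+1)%N ->
  (~ (((N' + n).+1, l) = (2, 2) \/ ((N' + n).+1, l) = (3, 2)) ->
     b + v #|F| l N'.+1 + V #|F| l n < V #|F| l (N' + n).+1)%N ->
  (exists t : {'GL_(N' + n).+1[F]},
     [/\ (l.-elt t)%g,
         (l ^ b <= #|GLfull (N' + n).+1 F : 'C_(GLfull (N' + n).+1 F)[t]|%g`_l)%N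
       & ~ (((N' + n).+1, l) = (2, 2) \/ ((N' + n).+1, l) = (3, 2)) ->
         (l ^ b < #|GLfull (N' + n).+1 F : 'C_(GLfull (N' + n).+1 F)[t]|%g`_l)%N])
  /\
  ((0 < n)%N -> forall b' : nat, (b' <= b)%N ->
   exists t : {'GL_(N' + n).+1[F]},
     [/\ (l.-elt t)%g,
         (l ^ b <= #|GLfull (N' + n).+1 F : 'C_(GLfull (N' + n).+1 F)[t]|%g`_l)%N,
         ~ (((N' + n).+1, l) = (2, 2) \/ ((N' + n).+1, l) = (3, 2)) ->
           (l ^ b < #|GLfull (N' + n).+1 F : 'C_(GLfull (N' + n).+1 F)[t]|%g`_l)%N
       & ((l ^ b').-primitive_root (\det (GLval t)))%R]).
Proof.
move=> pl hd ha N0 hy hE hle hlt.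
have aE : a ^+ (l ^ E) = 1.
  by rewrite hE mulnC exprM (prim_expr_order ha) expr1n.
have key : forall c : F, c ^+ (l ^ E) = 1 -> exists t : {'GL_(N' + n).+1[F]},
   [/\ (l.-elt t)%g,
       \det (GLval t) = \det (smx N' a) * \prod_(j < n) (if j == 0 :> nat then c else 1),
       (l ^ b <= #|GLfull (N' + n).+1 F : 'C_(GLfull (N' + n).+1 F)[t]|%g`_l)%N
     & ~ (((N' + n).+1, l) = (2, 2) \/ ((N' + n).+1, l) = (3, 2)) ->
         (l ^ b < #|GLfull (N' + n).+1 F : 'C_(GLfull (N' + n).+1 F)[t]|%g`_l)%N].
  move=> c cE.
  have [t [te td tl]] := @delta_case F l b E N' n a c pl hd ha N0 hy hE cE.
  exists t; split => //.
    by apply: pp_le => //; lia.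
  by move=> nex; apply: pp_lt => //; have := hlt nex; lia.
split.
  by have [t [te _ t1 t2]] := key 1 (expr1n _ _); exists t.
case: n hle hlt key => // n' hle hlt key _ b' bb'.
set w := a ^+ (l ^ b %/ l ^ b').
have sd0 : \det (smx N' a) != 0.
  by move: (smx_unit N' (a_neq0 pl ha)); rewrite unitmxE unitfE.
have sdE : \det (smx N' a) ^+ (l ^ E) = 1.
  rewrite -det_expr hE exprM smx_pow scalar_pow (prim_expr_order ha).
  by rewrite det1.
have wE : w ^+ (l ^ E) = 1 by rewrite /w -exprM mulnC exprM aE expr1n.
have cE : (w / \det (smx N' a)) ^+ (l ^ E) = 1 by rewrite expr_div_n wE sdE divr1.
have [t [te td t1 t2]] := key _ cE.
exists t; split => //.
rewrite td big_ord_recl /= big1 ?mulr1; last first.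
  by move=> j _; rewrite /bump /=.
rewrite mulrC divfK //.
by rewrite /w; apply: (dvdn_prim_root ha); rewrite dvdn_exp2l.
Qed.

End Finish.

End FileJ.

Section FileK.
Set Implicit Arguments. Unset Strict Implicit. Unset Printing Implicit Defensive.

Section NumFinal.
Variables (q l : nat).
Hypothesis hq : 1 < q.
Hypothesis hl : prime l.
Hypothesis hdiv : l %| q - 1.

Lemma V2 : V q l 2 = v q l 1 + v q l 2.
Proof. by rewrite /V big_nat_recr // big_nat1. Qed.

Lemma V3 : V q l 3 = v q l 1 + v q l 2 + v q l 3.
Proof. by rewrite /V big_nat_recr // big_nat_recr // big_nat1. Qed.

Lemma v1_pos : 0 < v q l 1.
Proof. by rewrite /v expn1 -(pfactor_dvdn 1 hl) ?expn1 //; lia. Qed.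

Lemma ineq_odd n : 2 < l -> v q l 1 + v q l l + V q l n < V q l (l.-1 + n).+1.
Proof.
move=> l2.
have -> : (l.-1 + n).+1 = n + l by lia.
rewrite V_split //.
have := windowN hq hl hdiv n (prime_gt0 hl).
have : 2 * v q l 1 <= (l - 1) * v q l 1 by apply: leq_mul => //; lia.
have := v1_pos; lia.
Qed.

Lemma ineq_two n : l = 2 -> v q l 1 + v q l 2 + V q l n <= V q l (1 + n).+1.
Proof.
move=> l2.
have -> : (1 + n).+1 = n + 2 by lia.
rewrite V_split //.
have := windowN hq hl hdiv n (isT : 0 < 2); lia.
Qed.

Lemma ineq_four n : l = 2 -> v q l 1 + v q l 4 + V q l n < V q l (3 + n).+1.
Proof.
move=> l2.
have -> : (3 + n).+1 = n + 4 by lia.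
rewrite V_split //.
have := windowN hq hl hdiv n (isT : 0 < 4); have := v1_pos; lia.
Qed.

Lemma ineq_nest1 r : l = 2 ->
  v q l 1 + (v q l 2 + (V q l 2 + V q l r)) < V q l (1 + (2 + r)).+1.
Proof.
move=> l2.
have -> : (1 + (2 + r)).+1 = r + 4 by lia.
rewrite V_split // V2.
have := window4 hq hl hdiv r l2.
have : v q l 2 < v q l 4 by rewrite l2; apply: v2_lt_v4 => //; rewrite -l2.
lia.
Qed.

Lemma ineq_nest2 r : l = 2 ->
  v q l 1 + (v q l 2 + (V q l 3 + V q l r)) < V q l (1 + (3 + r)).+1.
Proof.
move=> l2.
have -> : (1 + (3 + r)).+1 = r + 5 by lia.
rewrite V_split // V3.
have -> : (r + 5).+1 = (r + 4).+2 by lia.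
rewrite big_nat_recr /=; last by lia.
have := window4 hq hl hdiv r l2.
have : v q l 2 < v q l 4 by rewrite l2; apply: v2_lt_v4 => //; rewrite -l2.
have : v q l 3 = v q l 1 by rewrite l2; apply: v3_eq => //; rewrite -l2.
have := v1_le l hq (_ : 0 < (r + 4).+1) => /(_ isT).
lia.
Qed.

End NumFinal.

End FileK.

Unset Implicit Arguments.
Theorem lemma3p7 (F : finFieldType) (m l b : nat)
  (hl : prime l) (hlm : l <= m) (hdiv : l %| #|F| - 1)
  (hb : b = logn l (#|F| - 1)) :
  (exists t : {'GL_m[F]},
     [/\ (l.-elt t)%g,
         l ^ b <= #|GLfull m F : 'C_(GLfull m F)[t]|%g`_l
       & ~ ((m, l) = (2, 2) \/ (m, l) = (3, 2)) ->
         l ^ b < #|GLfull m F : 'C_(GLfull m F)[t]|%g`_l])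
  /\
  ((forall k : nat, m <> l ^ k) ->
   forall b' : nat, b' <= b ->
   exists t : {'GL_m[F]},
     [/\ (l.-elt t)%g,
         l ^ b <= #|GLfull m F : 'C_(GLfull m F)[t]|%g`_l,
         ~ ((m, l) = (2, 2) \/ (m, l) = (3, 2)) ->
           l ^ b < #|GLfull m F : 'C_(GLfull m F)[t]|%g`_l
       & ((l ^ b').-primitive_root (\det (GLval t)))%R]).
Proof.
have q1 : (1 < #|F|)%N := finNzRing_gt1 F.
have b0 : (0 < b)%N := b_gt0 hl hdiv hb.
have [a ha] := a_exists hb.
have vb : v #|F| l 1 = b by rewrite /v expn1 hb.
have [l2|l2] : l = 2 \/ 2 < l by have := prime_gt1 hl; lia.
  subst l.
  have hd2 : (2 %| #|F| - 1)%N := hdiv.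
  have hy2 : forall d (y : F), (0 < d < 2)%N -> (y ^+ 2 != a ^+ d)%R.
    by move=> d y hd; exact: (hyp_l hl hdiv hb ha).
  have [m3|m4] : (m <= 3)%N \/ (3 < m)%N by lia.
    have [n en] : exists n, m = (1 + n).+1 by exists (m - 2); lia.
    subst m.
    have hE : 2 ^ b.+1 = 1.+1 * 2 ^ b by rewrite expnS.
    have hle := ineq_two q1 hl hdiv n erefl.
    rewrite vb in hle.
    have hlt : ~ (((1 + n).+1, 2) = (2, 2) \/ ((1 + n).+1, 2) = (3, 2)) ->
        (b + v #|F| 2 2 + V #|F| 2 n < V #|F| 2 (1 + n).+1)%N.
      move=> nex; exfalso; apply: nex.
      case: n m3 {hle hlm} => [|[|n]] m3; [by left | by right | lia].
    have [P1 P2] := finish_delta hl hdiv ha (isT : (0 < 1)%N) hy2 hE hle hlt.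
    split; first exact: P1.
    move=> hnp b' hb'; apply: P2 => //.
    by rewrite lt0n; apply/eqP => n0; apply: (hnp 1%N); rewrite n0.
  have [b1|b2] : b = 1%N \/ (2 <= b)%N by lia.
    have ha1 : ((2 ^ 1).-primitive_root a)%R by move: ha; rewrite b1.
    have a2 : (a ^+ 2 = 1)%R by have := prim_expr_order ha1.
    split.
      have [r er] : exists r, m = (1 + (2 + r)).+1 by exists (m - 4); lia.
      subst m.
      have [t [te td tl]] := nested_case 1 r hd2 ha1 hy2.
      have hlt := ineq_nest1 q1 hl hdiv r erefl.
      rewrite vb in hlt.
      exists t; split => //.
        by apply: pp_le => //; lia.
      by move=> _; apply: pp_lt => //; lia.
    move=> hnp b' hb'.
    have m5 : (4 < m)%N by have := hnp 2%N; lia.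
    set w := (a ^+ (2 ^ b %/ 2 ^ b'))%R.
    have wprim : ((2 ^ b').-primitive_root w)%R.
      by apply: (dvdn_prim_root ha); rewrite dvdn_exp2l.
    set d := (\det (smx 1 a))%R.
    have d2 : (d ^+ 2 = 1)%R.
      by rewrite /d -det_expr smx_pow det_scalar a2.
    have w2 : (w ^+ 2 = 1)%R by rewrite /w -exprM mulnC exprM a2 expr1n.
    have [dw|dw] := eqVneq d w.
      have [r er] : exists r, m = (1 + (2 + r)).+1 by exists (m - 4); lia.
      subst m.
      have [t [te td tl]] := nested_case 1 r hd2 ha1 hy2.
      have hlt := ineq_nest1 q1 hl hdiv r erefl.
      rewrite vb in hlt.
      exists t; split => //.
      - by apply: pp_le => //; lia.
      - by move=> _; apply: pp_lt => //; lia.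
      by rewrite td -/d dw sqrrN expr1n mulr1.
    have [r er] : exists r, m = (1 + (3 + r)).+1 by exists (m - 5); lia.
    subst m.
    have [t [te td tl]] := nested_case 2 r hd2 ha1 hy2.
    have hlt := ineq_nest2 q1 hl hdiv r erefl.
    rewrite vb in hlt.
    have w0 : w != 0%R by apply/eqP => w0; move: w2; rewrite w0 expr0n /= => /eqP; rewrite eq_sym oner_eq0.
    have dmw : d = (- w)%R.
      have : ((d / w) ^+ 2 == 1)%R by rewrite expr_div_n d2 w2 divr1.
      rewrite sqrf_eq1 => /orP[/eqP e|/eqP e].
        by move: dw; rewrite -[d](divfK w0) e mul1r eqxx.
      by rewrite -[d](divfK w0) e mulN1r.
    exists t; split => //.
    - by apply: pp_le => //; lia.
    - by move=> _; apply: pp_lt => //; lia.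
    by rewrite td -/d dmw exprS sqrrN expr1n mulr1 mulrN1 opprK.
  have [n en] : exists n, m = (3 + n).+1 by exists (m - 4); lia.
    subst m.
  have hE : 2 ^ b.+2 = 3.+1 * 2 ^ b by rewrite !expnS mulnA.
  have hy4 : forall d (y : F), (0 < d < 4)%N -> (y ^+ 4 != a ^+ d)%R.
    by move=> d y hd; exact: (hyp_4 hl hdiv hb ha y erefl b2 hd).
  have hlt := ineq_four q1 hl hdiv n erefl.
  rewrite vb in hlt.
  have [P1 P2] := finish_delta hl hdiv ha (isT : (0 < 3)%N) hy4 hE (ltnW hlt) (fun _ => hlt).
  split; first exact: P1.
  move=> hnp b' hb'; apply: P2 => //.
  by rewrite lt0n; apply/eqP => n0; apply: (hnp 2%N); rewrite n0.
have [n en] : exists n, m = (l.-1 + n).+1 by exists (m - l); have := prime_gt1 hl; lia.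
    subst m.
have lpk : l.-1.+1 = l by rewrite prednK // prime_gt0.
have hy : forall d (y : F), (0 < d < l.-1.+1)%N -> (y ^+ l.-1.+1 != a ^+ d)%R.
  by rewrite lpk => d y hd; exact: (hyp_l hl hdiv hb ha).
have hE : l ^ b.+1 = l.-1.+1 * l ^ b by rewrite lpk expnS.
have N0 : (0 < l.-1)%N by lia.
have hlt := ineq_odd q1 hl hdiv n l2.
rewrite vb -{2}lpk in hlt.
have [P1 P2] := finish_delta hl hdiv ha N0 hy hE (ltnW hlt) (fun _ => hlt).
split; first exact: P1.
move=> hnp b' hb'; apply: P2 => //.
by rewrite lt0n; apply/eqP => n0; apply: (hnp 1%N); rewrite n0 addn0 expn1 lpk.
Qed.
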